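(* Let $X=(X,d,\mu)$ be a metric measure space with $\mu$ uniformly locally doubling. If a measure $\mathfrak m$ on $X$ is weakly noncollapsed, then $\mathfrak m$ has the uniformly weak asymptotically doubling property. Furthermore, for every $c>1$ and every $Q\in\operatorname{Q}_\mu(1)$, $\underline{C}_{\mathfrak m}(c)\le 2^{([c]+1)Q}$, where $[c]=\max\{k\in\mathbb Z:k\le c\}$.
   Context: A metric measure space is a triple $X=(X,d,\mu)$ with $(X,d)$ a complete separable metric space and $\mu$ a Borel regular measure with $0<\mu(B)<\infty$ for every ball $B$ and $\operatorname{supp}\mu=X$. All balls are closed: $B_r(x)=\{y:d(x,y)\le r\}$. A measure on $X$ means a nonzero Borel regular locally finite (outer) measure. $\mu$ is uniformly locally doubling if for every $R>0$, $\sup_{r\in(0,R]}\sup_{x}\mu(B_{2r}(x))/\mu(B_r(x))<\infty$. A measure $\mathfrak m$ is weakly noncollapsed if $\inf_{x\in\operatorname{supp}\mathfrak m}\liminf_{r\to0}\mathfrak m(B_r(x))/\mu(B_r(x))>0$. $\mathfrak m$ has the uniformly weak asymptotically doubling property if for every $c>0$, $\underline C_{\mathfrak m}(c):=\lim_{R\to0^+}\sup_{x\in\operatorname{supp}\mathfrak m}\inf_{r\in(0,R]}\mathfrak m(B_{cr}(x))/\mathfrak m(B_r(x))<\infty$. $\mu$ has relative lower volume decay of order $Q>0$ up to scale $R$ if there is $C(Q,R)>0$ such that $(r(B')/r(B))^Q\le C(Q,R)\mu(B')/\mu(B)$ for all closed balls $B'\subset B$ with $r(B)<R$; $\operatorname{Q}_\mu(R)$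 denotes the set of all such $Q$. *)

(* Defs.v *)
From HB Require Import structures.
From mathcomp Require Import all_boot all_order all_algebra.
From mathcomp Require Import all_classical all_reals all_analysis.
Set Implicit Arguments. Unset Strict Implicit. Unset Printing Implicit Defensive.
Import Order.TTheory GRing.Theory Num.Theory.
Local Open Scope classical_set_scope.
Local Open Scope ring_scope.

Section MMS.
Variables (R : realType) (X : Type) (d : X -> X -> R).

Definition is_metric : Prop :=
  [/\ forall x y, 0 <= d x y,
      forall x y, d x y = 0 <-> x = y,
      forall x y, d x y = d y x &
      forall x y z, d x z <= d x y + d y z].

Definition d_complete : Prop :=
  forall u : nat -> X,
    (forall e : R, 0 < e -> exists N : nat, forall n m : nat,
        (N <= n)%N -> (N <= m)%N -> d (u n) (u m) < e) ->
    exists l : X, forall e : R, 0 < e -> exists N : nat, forall n : nat,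
        (N <= n)%N -> d (u n) l < e.

Definition d_separable : Prop :=
  exists D : set X, countable D /\
    forall x e, 0 < e -> exists2 y, D y & d x y < e.

Definition cs_metric_space : Prop := [/\ is_metric, d_complete & d_separable].

Definition cball (x : X) (r : R) : set X := [set y | d x y <= r].

Definition d_open (A : set X) : Prop :=
  forall x, A x -> exists2 e : R, 0 < e & [set y | d x y < e] `<=` A.

Definition d_borel (A : set X) : Prop := <<s d_open >> A.

Definition borel_regular (m : set X -> \bar R) : Prop :=
  (forall B, d_borel B -> caratheodory_measurable m B) /\
  (forall A, exists B, [/\ d_borel B, A `<=` B & m B = m A]).

Definition locally_finite (m : set X -> \bar R) : Prop :=
  forall x, exists2 r : R, 0 < r & (m (cball x r) < +oo)%E.

Definition nonzero_measure (m : set X -> \bar R) : Prop :=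
  exists A, m A <> 0%E.

Definition supp (m : set X -> \bar R) : set X :=
  [set x | forall r : R, 0 < r -> (0 < m (cball x r))%E].

Definition is_measure_on (m : {outer_measure set X -> \bar R}) : Prop :=
  [/\ nonzero_measure m, borel_regular m & locally_finite m].

Definition mm_space (mu : {outer_measure set X -> \bar R}) : Prop :=
  [/\ cs_metric_space, borel_regular mu,
      (forall x r, 0 < r -> (0 < mu (cball x r))%E /\ (mu (cball x r) < +oo)%E) &
      supp mu = setT].

(* quotient a/b of extended reals, used only with 0 < b;
   convention: +oo/+oo = +oo, a/+oo = 0 for finite a *)
Definition eratio (a b : \bar R) : \bar R :=
  match b with
  | r%:E => (a * (r^-1)%:E)%E
  | +oo%E => if a is +oo%E then +oo%E else 0%E
  | -oo%E => 0%E
  end.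

Definition unif_loc_doubling (mu : set X -> \bar R) : Prop :=
  forall Rr : R, 0 < Rr -> exists C : R, forall r x, 0 < r -> r <= Rr ->
    (eratio (mu (cball x (2 * r))) (mu (cball x r)) <= C%:E)%E.

Definition liminf0 (f : R -> \bar R) : \bar R :=
  ereal_sup [set ereal_inf (f @` [set r | 0 < r < delta]) | delta in [set delta : R | 0 < delta]].

Definition weakly_noncollapsed (mu m : set X -> \bar R) : Prop :=
  (0 < ereal_inf [set liminf0 (fun r => eratio (m (cball x r)) (mu (cball x r)))
                  | x in supp m])%E.

Definition wad_aux (m : set X -> \bar R) (c Rr : R) : \bar R :=
  ereal_sup [set ereal_inf [set eratio (m (cball x (c * r))) (m (cball x r))
                            | r in [set r : R | 0 < r <= Rr]]
             | x in supp m].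

Definition lowerC (m : set X -> \bar R) (c : R) : \bar R :=
  lim (wad_aux m c Rr @[Rr --> 0^'+]).

Definition unif_weak_asymp_doubling (m : set X -> \bar R) : Prop :=
  forall c : R, 0 < c -> (lowerC m c < +oo)%E.

Definition rel_lower_volume_decay (mu : set X -> \bar R) (Q Rr : R) : Prop :=
  0 < Q /\ exists2 C : R, 0 < C &
    forall (x' x : X) (r' r : R), 0 < r' -> 0 < r -> r < Rr ->
      cball x' r' `<=` cball x r ->
      (r' / r) `^ Q <= C * (fine (mu (cball x' r')) / fine (mu (cball x r))).

Definition Qset (mu : set X -> \bar R) (Rr : R) : set R :=
  [set Q | rel_lower_volume_decay mu Q Rr].

End MMS.

(* Main.v *)
Require Import Defs.
From HB Require Import structures.
From mathcomp Require Import all_boot all_order all_algebra.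
From mathcomp Require Import all_classical all_reals all_analysis.
From mathcomp Require Import lra ring.
Import Order.TTheory GRing.Theory Num.Theory.
Local Open Scope classical_set_scope.
Local Open Scope ring_scope.
Lemma bernoulli_le (R : realFieldType) (t : R) n : 0 <= t -> 1 + n%:R * t <= (1 + t) ^+ n.
Proof.
move=> t0; elim: n => [|n IH]; first by rewrite mul0r addr0 expr0.
rewrite exprS -[X in X <= _]addr0.
have h : 1 + n.+1%:R * t <= (1 + t) * (1 + n%:R * t).
  rewrite mulrDr mulr1 mulrDl mul1r -natr1 mulrDl mul1r.
  have : 0 <= t * (n%:R * t) by rewrite mulr_ge0 // mulr_ge0.
  lra.
rewrite addr0; apply: le_trans h _; apply: ler_wpM2l => //; lra.
Qed.

Lemma supp_noncollapsed (R : realType) (X : Type) (d : X -> X -> R)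
  (mu m : set X -> \bar R) x :
  weakly_noncollapsed d mu m -> supp d m x ->
  exists a : R, 0 < a /\ exists2 del : R, 0 < del &
    forall r, 0 < r < del -> (a%:E < eratio (m (cball d x r)) (mu (cball d x r)))%E.
Proof.
rewrite /weakly_noncollapsed; set I := ereal_inf _ => I0 sx.
have [a [a0 aI]] : exists a : R, 0 < a /\ (a%:E < I)%E.
  move: I0; case: I => [r| |] //.
  - rewrite lte_fin => r0; exists (r / 2); split; first by rewrite divr_gt0.
    rewrite lte_fin; lra.
  - by move=> _; exists 1; split => //; rewrite ltry.
have : (I <= liminf0 (fun r => eratio (m (cball d x r)) (mu (cball d x r))))%E.
  by apply: ereal_inf_lbound; exists x.
move=> /(lt_le_trans aI) /ereal_sup_gt [_ [del del0 <-]] ay.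
exists a; split => //; exists del => // r rdel.
apply: (lt_le_trans ay); apply: ereal_inf_lbound; exists r => //.
Qed.

Lemma lowerC_le (R : realType) (X : Type) (d : X -> X -> R) (m : set X -> \bar R) c (K : R) :
  0 <= K -> (forall Rr, 0 < Rr -> (wad_aux d m c Rr <= K%:E)%E) -> (lowerC d m c <= K%:E)%E.
Proof.
move=> K0 H; rewrite /lowerC.
have [cv|ncv] := pselect (cvg (wad_aux d m c Rr @[Rr --> 0^'+])).
  apply: lime_le => //; near=> Rr; apply: H; near: Rr; exact: nbhs_right_gt.
by rewrite dvgP.
Unshelve. all: by end_near.
Qed.

Lemma core (R : realType) (X : Type) (d : X -> X -> R)
  (mu m : {outer_measure set X -> \bar R}) x (c L A K r1 : R) :
  (forall x r, 0 < r -> (0 < mu (cball d x r))%E /\ (mu (cball d x r) < +oo)%E) ->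
  locally_finite d m -> weakly_noncollapsed d mu m -> supp d m x ->
  1 < c -> 0 < L -> L < K -> 0 < A -> 0 < r1 ->
  (forall n r, 0 < r -> r <= r1 ->
     A * (L ^+ n)^-1 * fine (mu (cball d x r)) <= fine (mu (cball d x (r / c ^+ n)))) ->
  forall Rr, 0 < Rr -> exists2 r, 0 < r <= Rr &
    (eratio (m (cball d x (c * r))) (m (cball d x r)) <= K%:E)%E.
Proof.
move=> muB lfm wnc sx c1 L0 LK A0 r10 Hdec Rr Rr0.
have [a [a0 [del del0 Ha]]] := @supp_noncollapsed _ _ d mu m x wnc sx.
have [rho rho0 mrho] := lfm x.
pose r0 := Num.min (Num.min Rr r1) (Num.min (del / 2) rho).
have r00 : 0 < r0 by rewrite !lt_min Rr0 r10 rho0 divr_gt0.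
have r0Rr : r0 <= Rr by rewrite !ge_min lexx.
have r0r1 : r0 <= r1 by rewrite !ge_min lexx orbT.
have r0del : r0 < del.
  apply: (le_lt_trans (y := del / 2)); first by rewrite !ge_min lexx !orbT.
  lra.
have r0rho : r0 <= rho by rewrite !ge_min lexx !orbT.
have c0 : 0 < c by lra.
have cn0 n : 0 < c ^+ n by rewrite exprn_gt0.
have cn1 n : 1 <= c ^+ n by rewrite exprn_ege1 // ltW.
have sn0 n : 0 < r0 / c ^+ n by rewrite divr_gt0.
have snr0 n : r0 / c ^+ n <= r0.
  by rewrite ler_pdivrMr // ler_peMr // ltW.
pose g n := fine (m (cball d x (r0 / c ^+ n))).
have gE n : m (cball d x (r0 / c ^+ n)) = (g n)%:E.
  rewrite fineK // ge0_fin_numE ?outer_measure_ge0 //.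
  apply: le_lt_trans mrho; apply: le_outer_measure => y /=.
  rewrite /cball /= => /le_trans; apply; exact: le_trans (snr0 n) r0rho.
have g0 n : 0 < g n by rewrite -lte_fin -gE; apply: sx.
have [[n Hn]|Hall] := pselect (exists n,
   (eratio (m (cball d x (c * (r0 / c ^+ n.+1)))) (m (cball d x (r0 / c ^+ n.+1))) <= K%:E)%E).
  exists (r0 / c ^+ n.+1) => //; rewrite sn0 /=; exact: le_trans (snr0 _) r0Rr.
have Kg n : K * g n.+1 < g n.
  have : (K%:E < eratio (m (cball d x (c * (r0 / c ^+ n.+1)))) (m (cball d x (r0 / c ^+ n.+1))))%E.
    by rewrite ltNge; apply/negP => h; apply: Hall; exists n.
  have -> : c * (r0 / c ^+ n.+1) = r0 / c ^+ n.
    have cne := gt_eqF (cn0 n); have ce := gt_eqF c0.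
    rewrite exprS; field; by rewrite ?cne ?ce.
  rewrite !gE /eratio -EFinM lte_fin ltr_pdivlMr //.
have K0 : 0 < K by lra.
have Kn n : K ^+ n * g n <= g 0.
  elim: n => [|n IH]; first by rewrite expr0 mul1r.
  apply: le_trans IH; rewrite exprSr -mulrA; apply: ler_wpM2l; [by rewrite exprn_ge0 // ltW | exact: ltW (Kg n)].
pose M := fine (mu (cball d x r0)).
have M0 : 0 < M.
  have [h1 h2] := muB x r0 r00.
  by rewrite /M; move: h1 h2; case: (mu _) => //= r; rewrite !lte_fin.
have low n : a * (A * (L ^+ n)^-1 * M) < g n.
  have h := Ha (r0 / c ^+ n); rewrite sn0 /= in h.
  have := h (le_lt_trans (snr0 n) r0del).
  have [h1 h2] := muB x (r0 / c ^+ n) (sn0 n).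
  have hd := Hdec n r0 r00 r0r1.
  move: h1 h2 hd; rewrite gE /eratio; case: (mu _) => //= mv; rewrite !lte_fin => mv0 _ hd.
  rewrite ltr_pdivlMr // => hh.
  apply: le_lt_trans hh; apply: ler_wpM2l; [exact: ltW| exact: hd].
exfalso.
pose t := K / L - 1.
have t0 : 0 < t by rewrite /t subr_gt0 ltr_pdivlMr // mul1r.
pose B := a * A * M.
have B0 : 0 < B by rewrite /B !mulr_gt0.
have [N HN] : exists N : nat, g 0 / (B * t) < N%:R.
  exists (Num.Def.archi_bound (g 0 / (B * t))); apply: archi_boundP.
  by rewrite ltW // divr_gt0 // mulr_gt0.
have key : B * (1 + N%:R * t) <= g 0.
  apply: le_trans (Kn N).
  have e1 : 1 + t = K / L by rewrite /t; lra.
  apply: (le_trans (y := B * (1 + t) ^+ N)).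
    by rewrite ler_pM2l // bernoulli_le // ltW.
  have e2 : B * (1 + t) ^+ N = K ^+ N * (a * (A * (L ^+ N)^-1 * M)).
    rewrite e1 exprMn exprVn /B; ring.
  rewrite e2; apply: ler_wpM2l; [by rewrite exprn_ge0 // ltW | exact: ltW (low N)].
move: HN; rewrite ltr_pdivrMr ?mulr_gt0 // => HN.
have e3 : B * (1 + N%:R * t) = B + N%:R * (B * t) by ring.
move: key; rewrite e3; move: HN; set P := N%:R * (B * t); lra.
Qed.

Lemma wad_le (R : realType) (X : Type) (d : X -> X -> R) (m : set X -> \bar R) c (K : R) :
  (forall x, supp d m x -> forall Rr, 0 < Rr -> exists2 r, 0 < r <= Rr &
    (eratio (m (cball d x (c * r))) (m (cball d x r)) <= K%:E)%E) ->
  forall Rr, 0 < Rr -> (wad_aux d m c Rr <= K%:E)%E.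
Proof.
move=> H Rr Rr0; apply: ub_ereal_sup => _ [x sx <-].
have [r r0 hr] := H x sx Rr Rr0.
by apply: le_trans hr; apply: ereal_inf_lbound; exists r.
Qed.

Lemma eratio_le (R : realType) (a a' b : \bar R) :
  (0 <= b)%E -> (a <= a')%E -> (eratio a b <= eratio a' b)%E.
Proof.
case: b => [r| |] //= r0 aa.
  by apply: lee_wpmul2r => //; rewrite lee_fin invr_ge0 -lee_fin.
by move: aa; case: a => [s| |]; case: a' => [s'| |].
Qed.

Lemma fmu_le (R : realType) (X : Type) (d : X -> X -> R) (mu : {outer_measure set X -> \bar R}) x s s' :
  (forall x r, 0 < r -> (0 < mu (cball d x r))%E /\ (mu (cball d x r) < +oo)%E) ->
  0 < s -> s <= s' -> fine (mu (cball d x s)) <= fine (mu (cball d x s')).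
Proof.
move=> muB s0 ss.
have s'0 : 0 < s' by apply: lt_le_trans ss.
have [h1 h2] := muB x s s0; have [h1' h2'] := muB x s' s'0.
apply: fine_le.
- by rewrite ge0_fin_numE // ltW.
- by rewrite ge0_fin_numE // ltW.
by apply: le_outer_measure => y; rewrite /cball /= => /le_trans; apply.
Qed.

Lemma partQ (R : realType) (X : Type) (d : X -> X -> R)
  (mu m : {outer_measure set X -> \bar R}) (c Q : R) :
  (forall x r, 0 < r -> (0 < mu (cball d x r))%E /\ (mu (cball d x r) < +oo)%E) ->
  locally_finite d m -> weakly_noncollapsed d mu m ->
  1 < c -> Qset d mu 1 Q ->
  (lowerC d m c <= (2 `^ (((Num.floor c)%:~R + 1) * Q))%:E)%E.
Proof.
move=> muB lfm wnc c1 [Q0 [C C0 HC]].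
have c0 : 0 < c by lra.
have h21 : (2^-1 : R) < 1 by lra.
have LK : c `^ Q < 2 `^ (((Num.floor c)%:~R + 1) * Q).
  have fc : (0 <= Num.floor c)%R by rewrite floor_ge0; lra.
  have fc2 := floorD1_gt c.
  move: fc fc2; case: (Num.floor c) => // k _.
  rewrite intrD.
  have -> : ((k%:Z)%:~R : R) = k%:R by [].
  rewrite natr1 => ck.
  rewrite powRrM powR_mulrn //.
  apply: gt0_ltr_powR => //; rewrite ?nnegrE ?ltW ?exprn_ge0 //.
  apply: lt_le_trans ck _; by rewrite -natrX ler_nat ltnW // ltn_expl.
apply: (@lowerC_le R X d m c); first exact: powR_ge0.
apply: wad_le => x sx.
apply: (@core R X d mu m x c (c `^ Q) (C^-1) _ (2^-1)) => //.
- exact: powR_gt0.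
- by rewrite invr_gt0.
- move=> n r r0 rr1.
  have cn0 : 0 < c ^+ n by rewrite exprn_gt0.
  have rn0 : 0 < r / c ^+ n by rewrite divr_gt0.
  have sub : cball d x (r / c ^+ n) `<=` cball d x r.
    move=> y; rewrite /cball /= => /le_trans; apply.
    rewrite ler_pdivrMr //; apply: ler_peMr; [exact: ltW | apply: exprn_ege1; lra].
  have := HC x x (r / c ^+ n) r rn0 r0 (le_lt_trans rr1 h21) sub.
  have -> : r / c ^+ n / r = (c ^+ n)^-1.
    have := gt_eqF r0; have := gt_eqF cn0; move=> h1 h2; field.
    by rewrite h1 h2.
  move=> H0.
  have e : ((c ^+ n)^-1) `^ Q = (c `^ Q ^+ n)^-1.
    by rewrite -powR_invn ?ltW // -powRrM mulrC powRrM powR_invn ?powR_ge0.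
  rewrite e {e} in H0; move: H0.
  have [h1 h2] := muB x r r0; have [h1' h2'] := muB x (r / c ^+ n) rn0.
  move: h1 h2 h1' h2'.
  case: (mu (cball d x r)) => // q; case: (mu (cball d x (r / c ^+ n))) => // p /=.
  rewrite !lte_fin => q0 _ p0 _ H.
  apply: (le_trans (y := C^-1 * (C * (p / q)) * q)).
    apply: ler_wpM2r; first exact: ltW.
    by apply: ler_wpM2l => //; rewrite invr_ge0 ltW.
  have := gt_eqF q0; have := gt_eqF C0; move=> e1 e2.
  suff -> : C^-1 * (C * (p / q)) * q = p by [].
  by field; rewrite e1 e2.
Qed.

Lemma dbl_iter (R : realType) (X : Type) (d : X -> X -> R) (mu : {outer_measure set X -> \bar R}) x (C : R) :
  0 <= C ->
  (forall s, 0 < s -> s <= 1 -> fine (mu (cball d x (2 * s))) <= C * fine (mu (cball d x s))) ->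
  forall j s, 0 < s -> s <= 1 -> fine (mu (cball d x s)) <= C ^+ j * fine (mu (cball d x (s / 2 ^+ j))).
Proof.
move=> C0 H; elim => [|j IH] s s0 s1; first by rewrite expr0 mul1r divr1.
apply: le_trans (IH s s0 s1) _.
have e : s / 2 ^+ j = 2 * (s / 2 ^+ j.+1).
  rewrite exprS; field; by rewrite expf_neq0.
rewrite e [C ^+ j.+1]exprSr -mulrA; apply: ler_wpM2l; first exact: exprn_ge0.
apply: H; first by rewrite divr_gt0 // exprn_gt0.
rewrite ler_pdivrMr ?exprn_gt0 // mul1r; apply: le_trans s1 _.
by apply: exprn_ege1; lra.
Qed.

Lemma partD (R : realType) (X : Type) (d : X -> X -> R)
  (mu m : {outer_measure set X -> \bar R}) (c : R) :
  (forall x r, 0 < r -> (0 < mu (cball d x r))%E /\ (mu (cball d x r) < +oo)%E) ->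
  unif_loc_doubling d mu ->
  locally_finite d m -> weakly_noncollapsed d mu m -> 1 < c ->
  exists K : R, 0 <= K /\ forall x, supp d m x -> forall Rr, 0 < Rr -> exists2 r, 0 < r <= Rr &
    (eratio (m (cball d x (c * r))) (m (cball d x r)) <= K%:E)%E.
Proof.
move=> muB dbl lfm wnc c1.
have [C HC] := dbl 1 ltr01.
have HC' x s : 0 < s -> s <= 1 -> 0 < C /\ fine (mu (cball d x (2 * s))) <= C * fine (mu (cball d x s)).
  move=> s0 s1.
  have s20 : 0 < 2 * s by rewrite mulr_gt0.
  have [q0 qf] := muB x s s0; have [p0 pf] := muB x (2 * s) s20.
  have sub : cball d x s `<=` cball d x (2 * s).
    by move=> y; rewrite /cball /= => /le_trans; apply; lra.
  have qp := le_outer_measure mu _ _ sub.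
  have H := HC s x s0 s1.
  move: q0 qf p0 pf qp H.
  rewrite -(@fineK _ (mu (cball d x s))); last by rewrite ge0_fin_numE ?outer_measure_ge0 // (muB x s s0).2.
  rewrite -(@fineK _ (mu (cball d x (2 * s)))); last by rewrite ge0_fin_numE ?outer_measure_ge0 // (muB x _ s20).2.
  set q := fine _; set p := fine _.
  rewrite /= !lee_fin !lte_fin => q0 _ p0 _ qp H.
  move: H; rewrite ler_pdivrMr // => H.
  split; last by [].
  have : 0 < C * q by apply: lt_le_trans H.
  move=> h; nra.
have c0 : 0 < c by lra.
pose k := Num.Def.archi_bound c.
have ck : c <= 2 ^+ k.
  apply: ltW; apply: lt_le_trans (archi_boundP (ltW c0)) _.
  by by rewrite -natrX ler_nat ltnW // ltn_expl.
exists (`|C| ^+ k + 1); split; first by rewrite addr_ge0 // exprn_ge0.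
move=> x sx.
have C0 : 0 < C by have [] := HC' x 1 ltr01 (lexx _).
have aC : `|C| = C by rewrite gtr0_norm.
rewrite aC.
apply: (@core R X d mu m x c (C ^+ k) 1 _ 1) => //.
- exact: exprn_gt0.
- lra.
- move=> n r r0 r1.
  rewrite mul1r -exprM.
  have iter := @dbl_iter R X d mu x C (ltW C0) (fun s s0 s1 => (HC' x s s0 s1).2) (k * n) r r0 r1.
  have cn0 : 0 < c ^+ n by rewrite exprn_gt0.
  have Cp : 0 < C ^+ (k * n) by rewrite exprn_gt0.
  rewrite mulrC ler_pdivrMr // mulrC.
  apply: le_trans iter _; apply: ler_wpM2l; first exact: ltW.
  apply: fmu_le => //; first by rewrite divr_gt0 // exprn_gt0.
  rewrite ler_pdivlMr ?exprn_gt0 // mulrC mulrA ler_pdivrMr ?exprn_gt0 //.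
  rewrite mulrC; apply: ler_wpM2l; first exact: ltW.
  rewrite exprM; apply: lerXn2r => //; rewrite nnegrE ?ltW // exprn_ge0.
Qed.

Theorem mainTheorem5 (R : realType) (X : Type) (d : X -> X -> R)
  (mu : {outer_measure set X -> \bar R}) (m : {outer_measure set X -> \bar R}) :
  mm_space d mu ->
  unif_loc_doubling d mu ->
  is_measure_on d m ->
  weakly_noncollapsed d mu m ->
  unif_weak_asymp_doubling d m /\
  (forall (c Q : R), 1 < c -> Qset d mu 1 Q ->
     (lowerC d m c <= (2 `^ (((Num.floor c)%:~R + 1) * Q))%:E)%E).
Proof.
move=> [_ _ muB _] dbl [_ _ lfm] wnc; split; last first.
  by move=> c Q c1 hQ; exact: (@partQ R X d mu m c Q muB lfm wnc c1 hQ).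
move=> c c0.
have [c1|c1] := leP c 1.
  have [K [K0 HK]] := @partD R X d mu m 2 muB dbl lfm wnc (ltr_nat R 1 2).
  apply: le_lt_trans (ltry K).
  apply: (@lowerC_le R X d m c) => //.
  apply: wad_le => x sx Rr Rr0.
  have [r r0 hr] := HK x sx Rr Rr0.
  exists r => //; apply: le_trans hr; apply: eratio_le; first exact: outer_measure_ge0.
  apply: le_outer_measure => y; rewrite /cball /= => /le_trans; apply.
  by move/andP: r0 => [r0 _]; rewrite ler_pM2r //; lra.
have [K [K0 HK]] := @partD R X d mu m c muB dbl lfm wnc c1.
apply: le_lt_trans (ltry K).
apply: (@lowerC_le R X d m c) => //.
exact: wad_le.
Qed.
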